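(* In the upper half-space model $\mathbb{H}^3=\{x_3>0\}$ with metric $\frac{1}{x_3^2}(dx_1^2+dx_2^2+dx_3^2)$, let $\gamma:[0,\infty)\to\mathbb{H}^3$, $\gamma(s)=(\gamma_1(s),0,\gamma_2(s))$, be a regular curve parametrized by hyperbolic arc length with $\gamma_1>0$, $\gamma_2>0$, and set $w_{-1}=\gamma_1/\gamma_2$ and $x_g(\gamma([0,s]))=\frac{1}{s}\int_0^s w_{-1}(t)\,dt$. Suppose there are $C>0$ and $s_0>0$ such that $x_g(\gamma([0,s]))\le C\,s$ for all $s\ge s_0$. Then the end of revolution $f(\theta,s)=R_\theta\gamma(s)$ is parabolic.
   Context: $R_\theta$ is the rotation of angle $\theta$ about the $x_3$-axis, $(x_1,x_2,x_3)\mapsto(x_1\cos\theta-x_2\sin\theta,x_1\sin\theta+x_2\cos\theta,x_3)$, which is an isometry of $\mathbb{H}^3$. The end carries the induced metric. An end is parabolic if every bounded harmonic function on it is determined by its boundary values. *)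

(* Defs.v *)
From Stdlib Require Import Reals Lra.
From Coquelicot Require Import Coquelicot.
Open Scope R_scope.

(* Profile curve gamma(s) = (g1 s, 0, g2 s) in the upper half-space model. *)

(* Smoothness on [0, oo): derivatives of all orders exist at every s >= 0
   (functions are given on R; a smooth curve on [0,oo) always extends). *)
Definition smooth_on_half_line (g : R -> R) : Prop :=
  forall (n : nat) (s : R), 0 <= s -> ex_derive_n g n s.

Definition hyp_unit_speed (g1 g2 : R -> R) : Prop :=
  forall s, 0 <= s ->
    ((Derive g1 s) ^ 2 + (Derive g2 s) ^ 2) / (g2 s) ^ 2 = 1.

Definition w_m1 (g1 g2 : R -> R) (t : R) : R := g1 t / g2 t.

Definition x_g (g1 g2 : R -> R) (s : R) : R :=
  / s * RInt (w_m1 g1 g2) 0 s.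

Definition fE1 (g1 g2 : R -> R) (th s : R) : R := g1 s * cos th.
Definition fE2 (g1 g2 : R -> R) (th s : R) : R := g1 s * sin th.
Definition fE3 (g1 g2 : R -> R) (th s : R) : R := g2 s.

Definition d_s (h : R -> R -> R) (th s : R) : R := Derive (fun t => h th t) s.
Definition d_th (h : R -> R -> R) (th s : R) : R := Derive (fun t => h t s) th.

Definition hyp_inner (x3 a1 a2 a3 b1 b2 b3 : R) : R :=
  (a1 * b1 + a2 * b2 + a3 * b3) / x3 ^ 2.

Definition met_E (g1 g2 : R -> R) (th s : R) : R :=
  hyp_inner (fE3 g1 g2 th s)
    (d_s (fE1 g1 g2) th s) (d_s (fE2 g1 g2) th s) (d_s (fE3 g1 g2) th s)
    (d_s (fE1 g1 g2) th s) (d_s (fE2 g1 g2) th s) (d_s (fE3 g1 g2) th s).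
Definition met_F (g1 g2 : R -> R) (th s : R) : R :=
  hyp_inner (fE3 g1 g2 th s)
    (d_s (fE1 g1 g2) th s) (d_s (fE2 g1 g2) th s) (d_s (fE3 g1 g2) th s)
    (d_th (fE1 g1 g2) th s) (d_th (fE2 g1 g2) th s) (d_th (fE3 g1 g2) th s).
Definition met_G (g1 g2 : R -> R) (th s : R) : R :=
  hyp_inner (fE3 g1 g2 th s)
    (d_th (fE1 g1 g2) th s) (d_th (fE2 g1 g2) th s) (d_th (fE3 g1 g2) th s)
    (d_th (fE1 g1 g2) th s) (d_th (fE2 g1 g2) th s) (d_th (fE3 g1 g2) th s).
Definition met_det (g1 g2 : R -> R) (th s : R) : R :=
  met_E g1 g2 th s * met_G g1 g2 th s - (met_F g1 g2 th s) ^ 2.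

(* Laplace-Beltrami operator of the induced metric, in divergence form:
   Delta u = 1/sqrt g * ( d_s (sqrt g (g^ss u_s + g^sth u_th))
                        + d_th (sqrt g (g^ths u_s + g^thth u_th)) ). *)
Definition laplace_beltrami (g1 g2 : R -> R) (u : R -> R -> R) (th s : R) : R :=
  let D := met_det g1 g2 in
  let flux_s := fun th' s' =>
    sqrt (D th' s') * (met_G g1 g2 th' s' * d_s u th' s'
                       - met_F g1 g2 th' s' * d_th u th' s') / D th' s' in
  let flux_th := fun th' s' =>
    sqrt (D th' s') * (met_E g1 g2 th' s' * d_th u th' s'
                       - met_F g1 g2 th' s' * d_s u th' s') / D th' s' in
  / sqrt (D th s) * (d_s flux_s th s + d_th flux_th th s).

Definition C2_at (u : R -> R -> R) (th s : R) : Prop :=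
  ex_derive (fun t => u th t) s /\ ex_derive (fun t => u t s) th /\
  ex_derive (fun t => d_s u th t) s /\ ex_derive (fun t => d_s u t s) th /\
  ex_derive (fun t => d_th u th t) s /\ ex_derive (fun t => d_th u t s) th /\
  continuity_2d_pt u th s /\
  continuity_2d_pt (d_s u) th s /\ continuity_2d_pt (d_th u) th s /\
  continuity_2d_pt (d_s (d_s u)) th s /\ continuity_2d_pt (d_th (d_s u)) th s /\
  continuity_2d_pt (d_s (d_th u)) th s /\ continuity_2d_pt (d_th (d_th u)) th s.

Definition continuous_on_end (u : R -> R -> R) : Prop :=
  forall th s, 0 <= s -> forall eps, 0 < eps -> exists delta, 0 < delta /\
    forall th' s', 0 <= s' -> Rabs (th' - th) < delta -> Rabs (s' - s) < delta ->
      Rabs (u th' s' - u th s) < eps.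

(* Bounded harmonic function on the end S^1 x [0,oo) (theta is 2pi-periodic),
   harmonic in the interior s > 0, continuous up to the boundary s = 0. *)
Definition bounded_harmonic_on_end (g1 g2 : R -> R) (u : R -> R -> R) : Prop :=
  (forall th s, u (th + 2 * PI) s = u th s) /\
  (exists M, forall th s, 0 <= s -> Rabs (u th s) <= M) /\
  continuous_on_end u /\
  (forall th s, 0 < s -> C2_at u th s /\ laplace_beltrami g1 g2 u th s = 0).

Definition parabolic_end (g1 g2 : R -> R) : Prop :=
  forall u v : R -> R -> R,
    bounded_harmonic_on_end g1 g2 u -> bounded_harmonic_on_end g1 g2 v ->
    (forall th, u th 0 = v th 0) ->
    forall th s, 0 <= s -> u th s = v th s.

(* Main.v *)
Require Import Defs.
From Stdlib Require Import Reals.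
From Coquelicot Require Import Coquelicot.
From Stdlib Require Import Lra Lia ZArith IndefiniteDescription.
Open Scope R_scope.

Lemma ball_R (x e y : R) : ball x e y <-> Rabs (y - x) < e.
Proof. reflexivity. Qed.

Lemma locally_R (x : R) (P : R -> Prop) :
  (exists d : posreal, forall y, Rabs (y - x) < d -> P y) -> locally x P.
Proof. intros [d Hd]. exists d. intros y Hy. apply Hd. exact Hy. Qed.

Lemma locally_pos (s : R) : 0 < s -> locally s (fun y => 0 < y).
Proof.
  intros Hs. apply locally_R. exists (mkposreal (s/2) ltac:(lra)). simpl.
  intros y Hy. apply Rabs_def2 in Hy. lra.
Qed.

Lemma cont2d_snd (f : R -> R -> R) x y :
  continuity_2d_pt f x y -> continuous (fun t => f x t) y.
Proof.
  intros H. apply filterlim_locally. intros eps.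
  destruct (H eps) as [d Hd]. apply locally_R. exists d. intros z Hz.
  apply Hd. rewrite Rminus_eq_0, Rabs_R0. apply cond_pos. exact Hz.
Qed.

Lemma cont2d_fst (f : R -> R -> R) x y :
  continuity_2d_pt f x y -> continuous (fun t => f t y) x.
Proof.
  intros H. apply filterlim_locally. intros eps.
  destruct (H eps) as [d Hd]. apply locally_R. exists d. intros z Hz.
  apply Hd. exact Hz. rewrite Rminus_eq_0, Rabs_R0. apply cond_pos.
Qed.

Lemma cont2d_swap (f : R -> R -> R) x y :
  continuity_2d_pt f x y -> continuity_2d_pt (fun a b => f b a) y x.
Proof.
  intros H eps. destruct (H eps) as [d Hd]. exists d. intros u v Hu Hv.
  apply Hd; assumption.
Qed.

Lemma cont2d_of_fst (g : R -> R) x y :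
  continuous g x -> continuity_2d_pt (fun u v => g u) x y.
Proof.
  intros H eps. unfold continuous in H. rewrite filterlim_locally in H. destruct (H eps) as [d Hd].
  exists d. intros u v Hu Hv. apply Hd. exact Hu.
Qed.

Lemma cont_pt_of (f : R -> R) x : continuous f x -> continuity_pt f x.
Proof. intros H. apply continuity_pt_filterlim. exact H. Qed.

Lemma pt_cont (f : R -> R) x : continuity_pt f x -> continuous f x.
Proof. intros H. apply continuity_pt_filterlim. exact H. Qed.

Lemma cR_plus (f g : R -> R) x : continuous f x -> continuous g x ->
  continuous (fun y => f y + g y) x.
Proof. intros H1 H2. apply pt_cont. apply (continuity_pt_plus f g); apply cont_pt_of; assumption. Qed.

Lemma cR_minus (f g : R -> R) x : continuous f x -> continuous g x ->
  continuous (fun y => f y - g y) x.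
Proof. intros H1 H2. apply pt_cont. apply (continuity_pt_minus f g); apply cont_pt_of; assumption. Qed.

Lemma cR_mult (f g : R -> R) x : continuous f x -> continuous g x ->
  continuous (fun y => f y * g y) x.
Proof. intros H1 H2. apply pt_cont. apply (continuity_pt_mult f g); apply cont_pt_of; assumption. Qed.

Lemma cR_const (c x : R) : continuous (fun _ => c) x.
Proof. apply pt_cont. apply continuity_pt_const. intros a b; reflexivity. Qed.

Lemma cR_inv (f : R -> R) x : continuous f x -> f x <> 0 ->
  continuous (fun y => / f y) x.
Proof. intros H1 H2. apply pt_cont. apply (continuity_pt_inv f); [apply cont_pt_of|]; assumption. Qed.


Lemma deriv_param (F dF : R -> R -> R) a b s : 0 < s ->
  (forall u t, 0 < u -> is_derive (fun z => F z t) u (dF u t)) ->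
  (forall u t, 0 < u -> continuity_2d_pt F u t) ->
  (forall u t, 0 < u -> continuity_2d_pt dF u t) ->
  is_derive (fun z => RInt (fun t => F z t) a b) s (RInt (fun t => dF s t) a b).
Proof.
  intros Hs Hd HcF HcdF.
  assert (E : RInt (fun t => dF s t) a b = RInt (fun t => Derive (fun u => F u t) s) a b).
  { apply RInt_ext. intros x _. symmetry. apply is_derive_unique. apply Hd. exact Hs. }
  rewrite E.
  apply (is_derive_RInt_param (fun z t => F z t)).
  - apply (filter_imp (fun y => 0 < y)). 2: apply locally_pos; exact Hs.
    intros y Hy t _. eexists. apply Hd. exact Hy.
  - intros t _. apply continuity_2d_pt_ext_loc with (f := dF).
    + exists (mkposreal (s/2) ltac:(lra)). simpl. intros u v Hu _.
      apply Rabs_def2 in Hu. symmetry. apply is_derive_unique. apply Hd. lra.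
    + apply HcdF. exact Hs.
  - apply (filter_imp (fun y => 0 < y)). 2: apply locally_pos; exact Hs.
    intros y Hy. apply (@ex_RInt_continuous R_CompleteNormedModule). intros z _. apply cont2d_snd. apply HcF. exact Hy.
Qed.


Lemma is_derive_eq (f : R -> R) (x l l' : R) : is_derive f x l -> l = l' -> is_derive f x l'.
Proof. intros H ->. exact H. Qed.

Lemma is_derive_mult_R (f g : R -> R) (x a b : R) :
  is_derive f x a -> is_derive g x b ->
  is_derive (fun y => f y * g y) x (a * g x + f x * b).
Proof.
  intros Ha Hb. apply (is_derive_mult f g x a b Ha Hb). intros; apply Rmult_comm.
Qed.

Lemma is_derive_const_mult (f : R -> R) (x k a : R) :
  is_derive f x a -> is_derive (fun y => k * f y) x (k * a).
Proof. apply is_derive_scal. Qed.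

Lemma monotone_deriv (f df : R -> R) a b : a <= b ->
  (forall x, a <= x <= b -> is_derive f x (df x)) ->
  (forall x, a <= x <= b -> 0 <= df x) -> f a <= f b.
Proof.
  intros Hab Hd Hp.
  destruct (MVT_gen f a b df) as [c [Hc E]].
  - intros x Hx. rewrite Rmin_left in Hx by lra. rewrite Rmax_right in Hx by lra.
    apply Hd. lra.
  - intros x Hx. rewrite Rmin_left in Hx by lra. rewrite Rmax_right in Hx by lra.
    apply cont_pt_of. apply (@ex_derive_continuous R_AbsRing R_NormedModule). eexists. apply Hd. exact Hx.
  - rewrite Rmin_left in Hc by lra. rewrite Rmax_right in Hc by lra.
    assert (0 <= df c * (b - a)) by (apply Rmult_le_pos; [apply Hp; lra|lra]).
    lra.
Qed.

Lemma exRInt_R (f : R -> R) a b :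
  (forall z, Rmin a b <= z <= Rmax a b -> continuous f z) -> ex_RInt f a b.
Proof. intros H. apply (@ex_RInt_continuous R_CompleteNormedModule). exact H. Qed.

Lemma RInt_lin (f g : R -> R) a b al be :
  ex_RInt f a b -> ex_RInt g a b ->
  RInt (fun t => al * f t + be * g t) a b = al * RInt f a b + be * RInt g a b.
Proof.
  intros Hf Hg.
  Timeout 10 assert (Hf' : ex_RInt (fun t => scal al (f t)) a b) by (apply (@ex_RInt_scal R_NormedModule); exact Hf).
  Timeout 10 assert (Hg' : ex_RInt (fun t => scal be (g t)) a b) by (apply (@ex_RInt_scal R_NormedModule); exact Hg).
  Timeout 10 pose proof (@RInt_plus R_CompleteNormedModule _ _ a b Hf' Hg') as E.
  Timeout 10 pose proof (@RInt_scal R_CompleteNormedModule f a b al Hf) as E1.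
  Timeout 10 pose proof (@RInt_scal R_CompleteNormedModule g a b be Hg) as E2.
  Timeout 10 (change (RInt (fun t => al * f t + be * g t) a b = plus (scal al (RInt f a b)) (scal be (RInt g a b)))).
  Timeout 10 (rewrite <- E1, <- E2). Timeout 10 (etransitivity; [|exact E]). Timeout 10 (apply RInt_ext; intros; reflexivity).
Qed.

Lemma RInt_const_R a b (k : R) : RInt (fun _ => k) a b = (b - a) * k.
Proof. rewrite RInt_const. reflexivity. Qed.

Lemma RInt_pos_point (f : R -> R) a b x0 : a < b ->
  (forall x, a <= x <= b -> continuous f x) ->
  (forall x, a <= x <= b -> 0 <= f x) ->
  a <= x0 <= b -> 0 < f x0 -> 0 < RInt f a b.
Proof.
  intros Hab Hc Hp Hx0 Hf0.
  pose proof (Hc x0 Hx0) as H. unfold continuous in H. rewrite filterlim_locally in H.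
  destruct (H (mkposreal (f x0 / 2) ltac:(lra))) as [d Hd]. simpl in Hd.
  set (c := Rmax a (x0 - d/2)). set (e := Rmin b (x0 + d/2)).
  pose proof (cond_pos d) as dpos.
  assert (Hce : a <= c < e /\ e <= b).
  { unfold c, e. unfold Rmax, Rmin. repeat destruct Rle_dec; lra. }
  assert (Hcx : x0 - d/2 <= c /\ e <= x0 + d/2).
  { unfold c, e. unfold Rmax, Rmin. repeat destruct Rle_dec; lra. }
  assert (exs : forall u v, a <= u -> u <= v -> v <= b -> ex_RInt f u v).
  { intros u v H1 H2 H3. apply exRInt_R. intros z Hz.
    rewrite Rmin_left in Hz by lra. rewrite Rmax_right in Hz by lra. apply Hc. lra. }
  rewrite <- (RInt_Chasles f a c b); [| apply exs; lra | apply exs; lra].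
  rewrite <- (RInt_Chasles f c e b); [| apply exs; lra | apply exs; lra].
  assert (0 <= RInt f a c).
  { apply RInt_ge_0. lra. apply exs; lra. intros x Hx. apply Hp. lra. }
  assert (0 <= RInt f e b).
  { apply RInt_ge_0. lra. apply exs; lra. intros x Hx. apply Hp. lra. }
  assert (0 < RInt f c e).
  { apply RInt_gt_0. lra.
    - intros x Hx. assert (Hb : ball x0 d x).
      { apply ball_R. apply Rabs_def1; lra. }
      apply Hd in Hb. apply ball_R in Hb. apply Rabs_def2 in Hb. unfold minus, plus, opp in Hb; simpl in Hb. lra.
    - intros x Hx. apply Hc. lra. }
  change plus with Rplus. lra.
Qed.

Lemma RInt_ext_R (f g : R -> R) (a b : R) :
  (forall x : R, Rmin a b < x < Rmax a b -> f x = g x) -> RInt f a b = RInt g a b.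
Proof. apply RInt_ext. Qed.


Lemma exw (w : R -> R) (Hwc : forall t, 0 <= t -> continuous w t) x y :
  0 <= x -> 0 <= y -> ex_RInt w x y.
Proof.
  intros Hx Hy. apply exRInt_R. intros z Hz. apply Hwc.
  unfold Rmin in Hz; destruct Rle_dec in Hz; lra.
Qed.

Lemma exiw (w : R -> R) (Hw : forall t, 0 <= t -> 0 < w t)
  (Hwc : forall t, 0 <= t -> continuous w t) x y :
  0 <= x -> 0 <= y -> ex_RInt (fun t => / w t) x y.
Proof.
  intros Hx Hy. apply exRInt_R. intros z Hz.
  assert (0 <= z) by (unfold Rmin in Hz; destruct Rle_dec in Hz; lra).
  apply continuous_Rinv_comp. apply Hwc; lra. apply Rgt_not_eq. apply Hw. lra.
Qed.

Lemma dyadic (w : R -> R) C s0 : 0 < C -> 0 < s0 ->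
  (forall t, 0 <= t -> 0 < w t) -> (forall t, 0 <= t -> continuous w t) ->
  (forall s, s0 <= s -> RInt w 0 s <= C * s ^ 2) ->
  forall x, s0 <= x -> 1 / (4 * C) <= RInt (fun t => / w t) x (2 * x).
Proof.
  intros HC Hs0 Hw Hwc Hg x Hx.
  set (l := / (4 * C * x)).
  assert (Hl : 0 < l) by (unfold l; apply Rinv_0_lt_compat; nra).
  assert (Hex1 : ex_RInt (fun _ => 1) x (2 * x)).
  { apply exRInt_R. intros; apply cR_const. }
  assert (Hexw : ex_RInt w x (2 * x)) by (apply exw; auto; lra).
  assert (I1 : RInt (fun t => 2 * l * 1 + (- (l * l)) * w t) x (2 * x)
               <= RInt (fun t => / w t) x (2 * x)).
  { apply RInt_le. lra.
    - apply exRInt_R. intros z Hz. apply cR_plus. apply cR_const.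
      apply cR_mult. apply cR_const. apply Hwc.
      unfold Rmin in Hz; destruct Rle_dec in Hz; lra.
    - apply exiw; auto; lra.
    - intros t Ht. assert (0 < w t) by (apply Hw; lra).
      assert (E : / w t - (2 * l * 1 + - (l * l) * w t) = (1 - l * w t) ^ 2 / w t)
        by (field; lra).
      assert (0 <= (1 - l * w t) ^ 2 / w t).
      { apply Rmult_le_pos. apply pow2_ge_0. apply Rlt_le, Rinv_0_lt_compat; lra. }
      lra. }
  rewrite (RInt_lin (fun _ => 1) w) in I1 by assumption.
  rewrite RInt_const_R in I1.
  assert (E2 : RInt w x (2 * x) = RInt w 0 (2 * x) - RInt w 0 x).
  { pose proof (RInt_Chasles w 0 x (2 * x)) as E.
    assert (E' : RInt w 0 x + RInt w x (2 * x) = RInt w 0 (2 * x)).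
    { apply E. apply exw; auto; lra. exact Hexw. }
    lra. }
  assert (P0 : 0 <= RInt w 0 x).
  { apply RInt_ge_0. lra. apply exw; auto; lra. intros t Ht. apply Rlt_le, Hw. lra. }
  assert (G2 : RInt w 0 (2 * x) <= C * (2 * x) ^ 2) by (apply Hg; lra).
  assert (Hwx : RInt w x (2 * x) <= 4 * C * x ^ 2) by nra.
  assert (Hll : l * l * RInt w x (2 * x) <= l * l * (4 * C * x ^ 2)).
  { apply Rmult_le_compat_l. nra. exact Hwx. }
  assert (El : l * l * (4 * C * x ^ 2) = 1 / (4 * C)) by (unfold l; field; lra).
  assert (El2 : (2 * x - x) * (2 * l * 1) = 1 / (2 * C)) by (unfold l; field; lra).
  assert (1 / (2 * C) - 1 / (4 * C) = 1 / (4 * C)) by (field; lra).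
  nra.
Qed.

Lemma dyadic_n (w : R -> R) C s0 : 0 < C -> 0 < s0 ->
  (forall t, 0 <= t -> 0 < w t) -> (forall t, 0 <= t -> continuous w t) ->
  (forall s, s0 <= s -> RInt w 0 s <= C * s ^ 2) ->
  forall n a, s0 <= a -> INR n / (4 * C) <= RInt (fun t => / w t) a (a * 2 ^ n).
Proof.
  intros HC Hs0 Hw Hwc Hg n. induction n as [|n IH]; intros a Ha.
  - simpl. rewrite Rmult_1_r, RInt_point. change (zero : R) with 0. unfold Rdiv; lra.
  - assert (Hp : 1 <= 2 ^ n) by (apply pow_R1_Rle; lra).
    assert (Han : s0 <= a * 2 ^ n) by nra.
    assert (E : RInt (fun t => / w t) a (a * 2 ^ n) + RInt (fun t => / w t) (a * 2 ^ n) (a * 2 ^ S n)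
       = RInt (fun t => / w t) a (a * 2 ^ S n)).
    { apply (RInt_Chasles (V := R_CompleteNormedModule)); apply exiw; auto; simpl; nra. }
    rewrite (S_INR n), <- E.
    replace (a * 2 ^ S n) with (2 * (a * 2 ^ n)) by (simpl; ring).
    pose proof (dyadic w C s0 HC Hs0 Hw Hwc Hg _ Han).
    pose proof (IH a Ha).
    assert ((INR n + 1) / (4 * C) = INR n / (4 * C) + 1 / (4 * C)) by (field; lra).
    lra.
Qed.


Lemma is_derive_lin_R (f g : R -> R) x a b k :
  is_derive f x a -> is_derive g x b -> is_derive (fun y => f y - k * g y) x (a - k * b).
Proof.
  intros Ha Hb. apply (is_derive_minus f (fun y => k * g y) x a (k * b) Ha).
  apply is_derive_scal. exact Hb.
Qed.

Ltac cont_t := repeat (apply cR_plus || apply cR_mult || apply cR_minus || apply cR_const).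

Lemma core (w w' : R -> R) (h hs hss hth htt : R -> R -> R) (M C s0 : R)
  (HC : 0 < C) (Hs0 : 0 < s0)
  (Hw : forall t, 0 <= t -> 0 < w t)
  (Hwc : forall t, 0 <= t -> continuous w t)
  (Hwd : forall t, 0 < t -> is_derive w t (w' t))
  (Hg : forall s, s0 <= s -> RInt w 0 s <= C * s ^ 2)
  (Hds : forall s th, 0 < s -> is_derive (fun t => h t th) s (hs s th))
  (Hdss : forall s th, 0 < s -> is_derive (fun t => hs t th) s (hss s th))
  (Hdth : forall s th, 0 < s -> is_derive (fun t => h s t) th (hth s th))
  (Hdtt : forall s th, 0 < s -> is_derive (fun t => hth s t) th (htt s th))
  (Hc0 : forall s th, 0 < s -> continuity_2d_pt h s th)
  (Hc1 : forall s th, 0 < s -> continuity_2d_pt hs s th)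
  (Hc2 : forall s th, 0 < s -> continuity_2d_pt hss s th)
  (Hc3 : forall s th, 0 < s -> continuity_2d_pt hth s th)
  (Hc4 : forall s th, 0 < s -> continuity_2d_pt htt s th)
  (Hpde : forall s th, 0 < s -> w s * hss s th + w' s * hs s th + htt s th / w s = 0)
  (Hper : forall s, 0 < s -> h s (2 * PI) = h s 0 /\ hth s (2 * PI) = hth s 0)
  (Hbd : forall s th, 0 < s -> Rabs (h s th) <= M)
  (Hlim0 : forall eps, 0 < eps -> exists d, 0 < d /\
      forall s th, 0 < s < d -> 0 <= th <= 2 * PI -> Rabs (h s th) < eps) :
  forall s th, 0 < s -> 0 <= th <= 2 * PI -> h s th = 0.
Proof.
  set (P := 2 * PI). assert (HP : 0 < P) by (unfold P; pose proof PI_RGT_0; lra).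
  set (B := fun s => RInt (fun t => h s t * h s t) 0 P).
  set (G := fun s => RInt (fun t => 2 * h s t * hs s t) 0 P).
  set (G2 := fun s => RInt (fun t => 2 * (hs s t * hs s t) + 2 * (h s t * hss s t)) 0 P).
  assert (ct : forall (F : R -> R -> R) s x, (forall s th, 0 < s -> continuity_2d_pt F s th) ->
            0 < s -> continuous (fun t => F s t) x).
  { intros F s x HF Hs. apply cont2d_snd. apply HF. exact Hs. }
  assert (dB : forall s, 0 < s -> is_derive B s (G s)).
  { intros s Hs. unfold B, G.
    apply (deriv_param (fun z t => h z t * h z t) (fun z t => 2 * h z t * hs z t) 0 P s Hs).
    - intros u t Hu. eapply is_derive_eq. apply is_derive_mult_R; apply Hds; exact Hu. cbv beta; ring.
    - intros u t Hu. apply (continuity_2d_pt_mult h h); apply Hc0; exact Hu.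
    - intros u t Hu. apply (continuity_2d_pt_mult (fun u v => 2 * h u v) hs).
      apply (continuity_2d_pt_mult (fun _ _ => 2) h). apply continuity_2d_pt_const.
      apply Hc0; exact Hu. apply Hc1; exact Hu. }
  assert (dG : forall s, 0 < s -> is_derive G s (G2 s)).
  { intros s Hs. unfold G, G2.
    apply (deriv_param (fun z t => 2 * h z t * hs z t)
             (fun z t => 2 * (hs z t * hs z t) + 2 * (h z t * hss z t)) 0 P s Hs).
    - intros u t Hu. eapply is_derive_eq.
      apply (is_derive_mult_R (fun y => 2 * h y t) (fun y => hs y t)).
      apply is_derive_const_mult. apply Hds; exact Hu. apply Hdss; exact Hu. ring.
    - intros u t Hu. apply (continuity_2d_pt_mult (fun u v => 2 * h u v) hs).
      apply (continuity_2d_pt_mult (fun _ _ => 2) h). apply continuity_2d_pt_const.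
      apply Hc0; exact Hu. apply Hc1; exact Hu.
    - intros u t Hu.
      apply (continuity_2d_pt_plus (fun u v => 2 * (hs u v * hs u v)) (fun u v => 2 * (h u v * hss u v))).
      + apply (continuity_2d_pt_mult (fun _ _ => 2) (fun u v => hs u v * hs u v)).
        apply continuity_2d_pt_const. apply (continuity_2d_pt_mult hs hs); apply Hc1; exact Hu.
      + apply (continuity_2d_pt_mult (fun _ _ => 2) (fun u v => h u v * hss u v)).
        apply continuity_2d_pt_const. apply (continuity_2d_pt_mult h hss).
        apply Hc0; exact Hu. apply Hc2; exact Hu. }
  set (Phi := fun s => w s * G s).
  assert (dPhi : forall s, 0 < s -> is_derive Phi s (w' s * G s + w s * G2 s)).
  { intros s Hs. unfold Phi. apply is_derive_mult_R. apply Hwd; exact Hs. apply dG; exact Hs. }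
  assert (key : forall s, 0 < s -> 0 <= w' s * G s + w s * G2 s).
  { intros s Hs.
    assert (Hws : 0 < w s) by (apply Hw; lra).
    set (J := fun t => hth s t * hth s t + h s t * htt s t).
    set (A := fun t => 2 * w s * (hs s t * hs s t) + 2 / w s * (hth s t * hth s t)).
    assert (RJ : RInt J 0 P = 0).
    { assert (H := is_RInt_derive (V := R_CompleteNormedModule) (fun t => h s t * hth s t) J 0 P).
      apply is_RInt_unique in H.
      - rewrite H. destruct (Hper s Hs) as [E1 E2]. unfold P. rewrite E1, E2.
        unfold minus, plus, opp; simpl. ring.
      - intros x _. unfold J. eapply is_derive_eq. apply is_derive_mult_R.
        apply Hdth; exact Hs. apply Hdtt; exact Hs. ring.
      - intros x _. unfold J. cont_t; apply ct; assumption. }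
    assert (exA : ex_RInt A 0 P).
    { apply exRInt_R. intros z _. unfold A. cont_t; apply ct; assumption. }
    assert (exJ : ex_RInt J 0 P).
    { apply exRInt_R. intros z _. unfold J. cont_t; apply ct; assumption. }
    assert (RA : 0 <= RInt A 0 P).
    { apply RInt_ge_0. lra. exact exA. intros x _. unfold A.
      assert (0 <= 2 / w s) by (apply Rlt_le; apply Rdiv_lt_0_compat; lra).
      assert (0 <= hs s x * hs s x) by nra. assert (0 <= hth s x * hth s x) by nra. nra. }
    assert (E : w' s * G s + w s * G2 s = RInt (fun t => 1 * A t + (- (2 / w s)) * J t) 0 P).
    { unfold G, G2. rewrite <- RInt_lin.
      - apply RInt_ext_R. intros x _. unfold A, J.
        assert (Ht : htt s x = - w s * (w s * hss s x + w' s * hs s x)).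
        { pose proof (Hpde s x Hs) as Hp.
          assert (E0 : htt s x = (htt s x / w s) * w s) by (field; lra).
          assert (E1 : htt s x / w s = -(w s * hss s x + w' s * hs s x)) by lra.
          rewrite E0, E1. ring. }
        rewrite Ht. field. lra.
      - apply exRInt_R. intros z _. cont_t; apply ct; assumption.
      - apply exRInt_R. intros z _. cont_t; apply ct; assumption. }
    rewrite E, RInt_lin by assumption. rewrite RJ. lra. }
  assert (Phi_mono : forall a b, 0 < a -> a <= b -> Phi a <= Phi b).
  { intros a b Ha Hab. apply (monotone_deriv Phi (fun s => w' s * G s + w s * G2 s) a b Hab).
    - intros x Hx. apply dPhi. lra.
    - intros x Hx. apply key. lra. }
  assert (exiw' : forall x y, 0 <= x -> 0 <= y -> ex_RInt (fun t => / w t) x y).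
  { intros x y Hx Hy. apply exiw; assumption. }
  assert (Bbd : forall s, 0 < s -> B s <= P * (M * M)).
  { intros s Hs. unfold B.
    apply Rle_trans with (RInt (fun _ => M * M) 0 P).
    - apply RInt_le. lra.
      + apply exRInt_R. intros z _. cont_t; apply ct; assumption.
      + apply exRInt_R. intros z _. apply cR_const.
      + intros x _. pose proof (Hbd s x Hs) as Hb.
        pose proof (Rle_abs (h s x)). pose proof (Rle_abs (- h s x)).
        rewrite Rabs_Ropp in *. nra.
    - rewrite RInt_const_R. lra. }
  assert (B0 : forall s, 0 < s -> 0 <= B s).
  { intros s Hs. unfold B. apply RInt_ge_0. lra.
    apply exRInt_R. intros z _. cont_t; apply ct; assumption.
    intros x _. nra. }
  assert (Phi_np : forall s, 0 < s -> Phi s <= 0).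
  { intros s1 Hs1. destruct (Rle_dec (Phi s1) 0) as [|Hn]; [assumption|exfalso].
    set (c := Phi s1). assert (Hc : 0 < c) by (unfold c; lra).
    set (a := Rmax s1 s0).
    assert (Ha1 : s1 <= a) by apply Rmax_l. assert (Ha0 : s0 <= a) by apply Rmax_r.
    assert (Hcge : forall t, a <= t -> c <= Phi t).
    { intros t Ht. apply Phi_mono; lra. }
    set (K := fun t => B t - c * RInt (fun x => / w x) a t).
    assert (dK : forall t, 0 < t -> is_derive K t (G t - c * / w t)).
    { intros t Ht. unfold K. apply is_derive_lin_R. apply dB; exact Ht.
      apply (is_derive_RInt (V := R_CompleteNormedModule) (fun x => / w x)
               (fun b0 => RInt (fun x => / w x) a b0) a t).
      - apply (filter_imp (fun y => 0 < y)). 2: apply locally_pos; exact Ht.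
        intros y Hy. apply RInt_correct. apply exiw'; lra.
      - apply cR_inv. apply Hwc; lra. apply Rgt_not_eq. apply Hw; lra. }
    assert (Kmono : forall b, a <= b -> K a <= K b).
    { intros b Hb. apply (monotone_deriv K (fun t => G t - c * / w t) a b Hb).
      - intros x Hx. apply dK. lra.
      - intros x Hx. assert (Hwx : 0 < w x) by (apply Hw; lra).
        pose proof (Hcge x (proj1 Hx)) as Hp. unfold Phi in Hp.
        assert (E : G x - c * / w x = (w x * G x - c) / w x) by (field; lra).
        rewrite E. apply Rmult_le_pos. lra. apply Rlt_le, Rinv_0_lt_compat; lra. }
    assert (Ka : K a = B a).
    { unfold K. rewrite RInt_point. change (zero : R) with 0. ring. }
    assert (Hbig : forall b, a <= b -> c * RInt (fun x => / w x) a b <= P * (M * M)).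
    { intros b Hb. pose proof (Kmono b Hb) as Hk. rewrite Ka in Hk. unfold K in Hk.
      pose proof (B0 a ltac:(lra)). pose proof (Bbd b ltac:(lra)). lra. }
    destruct (INR_unbounded (P * (M * M) * (4 * C) / c)) as [n Hn'].
    assert (Hp2 : 1 <= 2 ^ n) by (apply pow_R1_Rle; lra).
    pose proof (dyadic_n w C s0 HC Hs0 Hw Hwc Hg n a Ha0) as Hdy.
    pose proof (Hbig (a * 2 ^ n) ltac:(nra)) as Hb2.
    assert (H3 : c * (INR n / (4 * C)) <= P * (M * M)).
    { apply Rle_trans with (c * RInt (fun t : R => / w t) a (a * 2 ^ n)); [|exact Hb2].
      apply Rmult_le_compat_l; lra. }
    assert (H4 : INR n <= P * (M * M) * (4 * C) / c).
    { apply Rmult_le_reg_r with (c / (4 * C)). apply Rdiv_lt_0_compat; lra.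
      replace (P * (M * M) * (4 * C) / c * (c / (4 * C))) with (P * (M * M)) by (field; lra).
      replace (INR n * (c / (4 * C))) with (c * (INR n / (4 * C))) by (field; lra). exact H3. }
    lra. }
  assert (B_mono : forall a b, 0 < a -> a <= b -> B b <= B a).
  { intros a b Ha Hab.
    assert (- B a <= - B b).
    { apply (monotone_deriv (fun t => - B t) (fun t => - G t) a b Hab).
      - intros x Hx. apply (is_derive_opp B x (G x)). apply dB. lra.
      - intros x Hx. pose proof (Phi_np x ltac:(lra)) as Hp. unfold Phi in Hp.
        assert (0 < w x) by (apply Hw; lra). nra. }
    lra. }
  assert (Bz : forall s, 0 < s -> B s <= 0).
  { intros s Hs. destruct (Rle_dec (B s) 0) as [|Hn]; [assumption|exfalso].
    set (e := B s). assert (He : 0 < e) by (unfold e; lra).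
    set (e' := Rmin 1 (e / (2 * P))).
    assert (He' : 0 < e') by (unfold e'; apply Rmin_glb_lt; [lra|apply Rdiv_lt_0_compat; lra]).
    assert (He1 : e' <= 1) by apply Rmin_l. assert (He2 : e' <= e / (2 * P)) by apply Rmin_r.
    destruct (Hlim0 e' He') as [d [Hd Hdd]].
    set (t := Rmin s d / 2).
    assert (Ht : 0 < t /\ t < d /\ t <= s).
    { unfold t, Rmin. destruct Rle_dec; lra. }
    assert (Bt : B t <= P * (e' * e')).
    { unfold B. apply Rle_trans with (RInt (fun _ => e' * e') 0 P).
      - apply RInt_le. lra.
        + apply exRInt_R. intros z _. cont_t; apply ct; try assumption; lra.
        + apply exRInt_R. intros z _. apply cR_const.
        + intros x Hx. assert (Hh := Hdd t x ltac:(lra) ltac:(unfold P in Hx; lra)).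
          apply Rabs_def2 in Hh. nra.
      - rewrite RInt_const_R. lra. }
    pose proof (B_mono t s ltac:(lra) ltac:(lra)).
    assert (P * (e' * e') <= P * (e / (2 * P))).
    { apply Rmult_le_compat_l. lra. nra. }
    assert (P * (e / (2 * P)) = e / 2) by (field; lra).
    unfold e in *. lra. }
  intros s th Hs Hth.
  destruct (Req_dec (h s th) 0) as [|Hne]; [assumption|exfalso].
  assert (Hpos : 0 < B s).
  { unfold B. apply (RInt_pos_point _ 0 P th HP).
    - intros x _. cont_t; apply ct; assumption.
    - intros x _. nra.
    - exact Hth.
    - assert (h s th * h s th <> 0) by (apply Rmult_integral_contrapositive; tauto).
      nra. }
  pose proof (Bz s Hs). lra.
Qed.


Lemma ds_fE1 g1 g2 th t : d_s (fE1 g1 g2) th t = Derive g1 t * cos th.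
Proof. unfold d_s, fE1. apply Derive_scal_l. Qed.
Lemma ds_fE2 g1 g2 th t : d_s (fE2 g1 g2) th t = Derive g1 t * sin th.
Proof. unfold d_s, fE2. apply Derive_scal_l. Qed.
Lemma ds_fE3 g1 g2 th t : d_s (fE3 g1 g2) th t = Derive g2 t.
Proof. reflexivity. Qed.
Lemma dth_fE1 g1 g2 th t : d_th (fE1 g1 g2) th t = - (g1 t * sin th).
Proof. unfold d_th, fE1. rewrite Derive_scal. rewrite (is_derive_unique cos th (- sin th)).
  ring. apply is_derive_cos. Qed.
Lemma dth_fE2 g1 g2 th t : d_th (fE2 g1 g2) th t = g1 t * cos th.
Proof. unfold d_th, fE2. rewrite Derive_scal. rewrite (is_derive_unique sin th (cos th)).
  ring. apply is_derive_sin. Qed.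
Lemma dth_fE3 g1 g2 th t : d_th (fE3 g1 g2) th t = 0.
Proof. unfold d_th, fE3. apply Derive_const. Qed.

Lemma metE g1 g2 th t : hyp_unit_speed g1 g2 -> 0 <= t -> met_E g1 g2 th t = 1.
Proof.
  intros Hu Ht. unfold met_E, hyp_inner.
  rewrite ds_fE1, ds_fE2, ds_fE3. unfold fE3.
  rewrite <- (Hu t Ht). pose proof (sin2_cos2 th) as H. unfold Rsqr in *.
  f_equal. transitivity (Derive g1 t ^ 2 * (sin th * sin th + cos th * cos th) + Derive g2 t ^ 2);
  [ring | rewrite H; ring].
Qed.

Lemma metF g1 g2 th t : met_F g1 g2 th t = 0.
Proof.
  unfold met_F, hyp_inner. rewrite ds_fE1, ds_fE2, ds_fE3, dth_fE1, dth_fE2, dth_fE3.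
  unfold Rdiv. ring.
Qed.

Lemma metG g1 g2 th t : 0 < g2 t -> met_G g1 g2 th t = (w_m1 g1 g2 t) ^ 2.
Proof.
  intros H. unfold met_G, hyp_inner, w_m1. rewrite dth_fE1, dth_fE2, dth_fE3. unfold fE3.
  pose proof (sin2_cos2 th) as E. unfold Rsqr in *.
  transitivity (g1 t ^ 2 * (sin th * sin th + cos th * cos th) / g2 t ^ 2); [field; lra|].
  rewrite E. field. lra.
Qed.

Lemma metD g1 g2 th t : hyp_unit_speed g1 g2 -> 0 <= t -> 0 < g2 t ->
  met_det g1 g2 th t = (w_m1 g1 g2 t) ^ 2.
Proof. intros Hu Ht H. unfold met_det. rewrite metE, metF, metG; auto. ring. Qed.


Lemma lap_form (g1 g2 : R -> R) (w' : R -> R) (u : R -> R -> R) th s :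
  hyp_unit_speed g1 g2 -> (forall t, 0 <= t -> 0 < g1 t) -> (forall t, 0 <= t -> 0 < g2 t) ->
  (forall t, 0 < t -> is_derive (w_m1 g1 g2) t (w' t)) ->
  0 < s -> C2_at u th s ->
  laplace_beltrami g1 g2 u th s =
  / w_m1 g1 g2 s * (w' s * d_s u th s + w_m1 g1 g2 s * d_s (d_s u) th s
                    + d_th (d_th u) th s / w_m1 g1 g2 s).
Proof.
  intros Hu H1 H2 Hwd Hs HC2.
  set (w := w_m1 g1 g2).
  assert (Hw : forall t, 0 <= t -> 0 < w t).
  { intros t Ht. unfold w, w_m1. apply Rdiv_lt_0_compat; auto. }
  assert (Hsq : forall th' t, 0 <= t -> sqrt (met_det g1 g2 th' t) = w t).
  { intros th' t Ht. rewrite metD; auto. rewrite sqrt_pow2. reflexivity. apply Rlt_le, Hw, Ht. }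
  destruct HC2 as (Hx1 & Hx2 & Hx3 & Hx4 & Hx5 & Hx6 & _).
  assert (Hws : 0 < w s) by (apply Hw; lra).
  unfold laplace_beltrami. cbv zeta.
  rewrite (Hsq _ s) by lra.
  assert (E1 : Derive (fun t : R => sqrt (met_det g1 g2 th t) *
      (met_G g1 g2 th t * d_s u th t - met_F g1 g2 th t * d_th u th t) /
      met_det g1 g2 th t) s = Derive (fun t => w t * d_s u th t) s).
  { apply Derive_ext_loc. apply (filter_imp (fun y => 0 < y)). 2: apply locally_pos; exact Hs.
    intros y Hy. rewrite (Hsq _ y) by lra. rewrite metD, metF, metG; auto; try (apply H2; lra); try lra.
    fold w. assert (0 < w y) by (apply Hw; lra). field. lra. }
  assert (E2 : d_th (fun th' s' : R => sqrt (met_det g1 g2 th' s') *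
      (met_E g1 g2 th' s' * d_th u th' s' - met_F g1 g2 th' s' * d_s u th' s') /
      met_det g1 g2 th' s') th s = Derive (fun t => d_th u t s * / w s) th).
  { apply Derive_ext. intros y. rewrite (Hsq _ s) by lra. rewrite metD, metF, metE; auto; try (apply H2; lra); try lra.
    fold w. field. lra. }
  unfold d_s at 1. rewrite E1, E2. clear E1 E2.
  rewrite Derive_scal_l. rewrite Derive_mult.
  - rewrite (is_derive_unique w s (w' s)) by (apply Hwd; exact Hs).
    change (d_s (d_s u) th s) with (Derive (d_s u th) s). change (d_th (d_th u) th s) with (Derive (fun x => d_th u x s) th). field. lra.
  - eexists. apply Hwd. exact Hs.
  - exact Hx3.
Qed.


Lemma deriv_per (F : R -> R) T : (forall x, F (x + T) = F x) ->
  ex_derive F T -> Derive F T = Derive F 0.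
Proof.
  intros Hp Hd. symmetry. apply is_derive_unique.
  apply (is_derive_ext (fun x => F (x + T))). { intros t. apply Hp. }
  apply (is_derive_eq _ _ (scal 1 (Derive F T))).
  - apply (is_derive_comp F (fun x => x + T) 0).
    + rewrite Rplus_0_l. apply Derive_correct. exact Hd.
    + auto_derive. trivial. ring.
  - change (scal 1 (Derive F T)) with (1 * Derive F T). ring.
Qed.

Lemma per_nat (F : R -> R) T : (forall x, F (x + T) = F x) ->
  forall n x, F (x + INR n * T) = F x /\ F (x - INR n * T) = F x.
Proof.
  intros Hp n. induction n as [|n IH]; intros x.
  - simpl. split; f_equal; ring.
  - rewrite S_INR. split.
    + replace (x + (INR n + 1) * T) with ((x + INR n * T) + T) by ring.
      rewrite Hp. apply IH.
    + rewrite <- (proj2 (IH x)).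
      rewrite <- (Hp (x - (INR n + 1) * T)). f_equal. ring.
Qed.

Lemma per_Z (F : R -> R) T : (forall x, F (x + T) = F x) ->
  forall k x, F (x + IZR k * T) = F x.
Proof.
  intros Hp k x. destruct (Z_le_gt_dec 0 k) as [Hk|Hk].
  - rewrite <- (Z2Nat.id k Hk). rewrite <- INR_IZR_INZ. apply per_nat; auto.
  - replace k with (- Z.of_nat (Z.to_nat (- k)))%Z by lia.
    rewrite opp_IZR, <- INR_IZR_INZ.
    replace (x + - INR (Z.to_nat (- k)) * T) with (x - INR (Z.to_nat (- k)) * T) by ring.
    apply per_nat; auto.
Qed.

Lemma per_reduce (F : R -> R) T : 0 < T -> (forall x, F (x + T) = F x) ->
  forall x, exists y, 0 <= y <= T /\ F x = F y.
Proof.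
  intros HT Hp x. destruct (archimed (x / T)) as [H1 H2].
  set (k := up (x / T)) in *.
  exists (x + IZR (1 - k) * T). split.
  - rewrite minus_IZR. simpl.
    assert (x / T * T = x) by (field; lra).
    split; nra.
  - symmetry. apply per_Z. exact Hp.
Qed.

Lemma lim0_of (u v : R -> R -> R) :
  continuous_on_end u -> continuous_on_end v -> (forall th, u th 0 = v th 0) ->
  forall eps, 0 < eps -> exists d, 0 < d /\
    forall s th, 0 < s < d -> 0 <= th <= 2 * PI -> Rabs (u th s - v th s) < eps.
Proof.
  intros Hu Hv H0 eps He.
  assert (Hex : forall th, exists dl : posreal, forall th' s', 0 <= s' ->
            Rabs (th' - th) < dl -> Rabs (s' - 0) < dl -> Rabs (u th' s' - v th' s') < eps).
  { intros th. destruct (Hu th 0 (Rle_refl 0) (eps/2) ltac:(lra)) as [d1 [Hd1 H1]].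
    destruct (Hv th 0 (Rle_refl 0) (eps/2) ltac:(lra)) as [d2 [Hd2 H2]].
    exists (mkposreal (Rmin d1 d2) (Rmin_glb_lt _ _ _ Hd1 Hd2)). simpl.
    intros th' s' Hs' Ht Hs.
    assert (Hm1 := Rmin_l d1 d2). assert (Hm2 := Rmin_r d1 d2).
    specialize (H1 th' s' Hs' ltac:(lra) ltac:(lra)).
    specialize (H2 th' s' Hs' ltac:(lra) ltac:(lra)).
    rewrite H0 in H1. apply Rabs_def2 in H1. apply Rabs_def2 in H2.
    apply Rabs_def1; lra. }
  set (delta := fun th => proj1_sig (constructive_indefinite_description _ (Hex th))).
  assert (Hdelta : forall th th' s', 0 <= s' ->
            Rabs (th' - th) < delta th -> Rabs (s' - 0) < delta th -> Rabs (u th' s' - v th' s') < eps).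
  { intros th. unfold delta. destruct (constructive_indefinite_description _ (Hex th)) as [dl Hdl].
    simpl. exact Hdl. }
  destruct (compactness_value_1d 0 (2 * PI) delta) as [d Hd].
  exists d. split. apply cond_pos.
  intros s th Hs Hth.
  destruct (Rlt_le_dec (Rabs (u th s - v th s)) eps) as [|Hn]; [assumption|exfalso].
  apply (Hd th Hth). intros [t [Ht [Ht1 Ht2]]].
  assert (Rabs (u th s - v th s) < eps).
  { apply (Hdelta t th s). lra. exact Ht1. rewrite Rminus_0_r, Rabs_pos_eq by lra. lra. }
  lra.
Qed.


Theorem theorem8p1 (g1 g2 : R -> R)
  (Hsm1 : smooth_on_half_line g1) (Hsm2 : smooth_on_half_line g2)
  (Hunit : hyp_unit_speed g1 g2)
  (Hpos1 : forall s, 0 <= s -> 0 < g1 s)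
  (Hpos2 : forall s, 0 <= s -> 0 < g2 s)
  (C s0 : R) (HC : 0 < C) (Hs0 : 0 < s0)
  (Hgrowth : forall s, s0 <= s -> x_g g1 g2 s <= C * s) :
  parabolic_end g1 g2.
Proof.
  intros u v Hu Hv H0 th s Hs.
  set (w := w_m1 g1 g2).
  set (w' := fun t => (Derive g1 t * g2 t - g1 t * Derive g2 t) / g2 t ^ 2).
  assert (exd : forall g, smooth_on_half_line g -> forall t, 0 <= t -> ex_derive g t).
  { intros g Hg t Ht. apply (ex_derive_ext (Derive_n g 0)). intros; reflexivity. exact (Hg 1%nat t Ht). }
  assert (Hwd0 : forall t, 0 <= t -> is_derive w t (w' t)).
  { intros t Ht. unfold w, w_m1, w'. apply is_derive_div.
    apply Derive_correct, exd; auto. apply Derive_correct, exd; auto.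
    apply Rgt_not_eq, Hpos2, Ht. }
  assert (Hw : forall t, 0 <= t -> 0 < w t).
  { intros t Ht; unfold w, w_m1; apply Rdiv_lt_0_compat; auto. }
  assert (Hwc : forall t, 0 <= t -> continuous w t).
  { intros t Ht. apply (@ex_derive_continuous R_AbsRing R_NormedModule). eexists; apply Hwd0, Ht. }
  assert (Hg : forall s, s0 <= s -> RInt w 0 s <= C * s ^ 2).
  { intros x Hx. pose proof (Hgrowth x Hx) as G. unfold x_g in G. fold w in G.
    apply Rmult_le_reg_l with (/ x). apply Rinv_0_lt_compat; lra.
    replace (/ x * (C * x ^ 2)) with (C * x) by (field; lra). exact G. }
  assert (Hwd : forall t, 0 < t -> is_derive w t (w' t)) by (intros t Ht; apply Hwd0; lra).
  destruct Hu as (Hpu & [Mu HMu] & Hcu & Hhu).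
  destruct Hv as (Hpv & [Mv HMv] & Hcv & Hhv).
  assert (Hmain : forall s th, 0 < s -> 0 <= th <= 2 * PI -> u th s - v th s = 0).
  { apply (core w w' (fun s th => u th s - v th s) (fun s th => d_s u th s - d_s v th s)
      (fun s th => d_s (d_s u) th s - d_s (d_s v) th s) (fun s th => d_th u th s - d_th v th s)
      (fun s th => d_th (d_th u) th s - d_th (d_th v) th s) (Mu + Mv) C s0 HC Hs0 Hw Hwc Hwd Hg).
    - intros s' th' Hs'.
      destruct (Hhu th' s' Hs') as [[a1 _] _]. destruct (Hhv th' s' Hs') as [[b1 _] _].
      apply (is_derive_minus (fun t => u th' t) (fun t => v th' t)); apply Derive_correct; assumption.
    - intros s' th' Hs'.
      destruct (Hhu th' s' Hs') as [(_ & _ & a3 & _) _]. destruct (Hhv th' s' Hs') as [(_ & _ & b3 & _) _].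
      apply (is_derive_minus (fun t => d_s u th' t) (fun t => d_s v th' t)); apply Derive_correct; assumption.
    - intros s' th' Hs'.
      destruct (Hhu th' s' Hs') as [(_ & a2 & _) _]. destruct (Hhv th' s' Hs') as [(_ & b2 & _) _].
      apply (is_derive_minus (fun t => u t s') (fun t => v t s')); apply Derive_correct; assumption.
    - intros s' th' Hs'.
      destruct (Hhu th' s' Hs') as [(_ & _ & _ & _ & _ & a6 & _) _].
      destruct (Hhv th' s' Hs') as [(_ & _ & _ & _ & _ & b6 & _) _].
      apply (is_derive_minus (fun t => d_th u t s') (fun t => d_th v t s')); apply Derive_correct; assumption.
    - intros s' th' Hs'.
      destruct (Hhu th' s' Hs') as [(_ & _ & _ & _ & _ & _ & c1 & _) _].
      destruct (Hhv th' s' Hs') as [(_ & _ & _ & _ & _ & _ & e1 & _) _].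
      apply (cont2d_swap (fun a b => u a b - v a b) th' s'). apply continuity_2d_pt_minus; assumption.
    - intros s' th' Hs'.
      destruct (Hhu th' s' Hs') as [(_ & _ & _ & _ & _ & _ & _ & c1 & _) _].
      destruct (Hhv th' s' Hs') as [(_ & _ & _ & _ & _ & _ & _ & e1 & _) _].
      apply (cont2d_swap (fun a b => d_s u a b - d_s v a b) th' s'). apply continuity_2d_pt_minus; assumption.
    - intros s' th' Hs'.
      destruct (Hhu th' s' Hs') as [(_ & _ & _ & _ & _ & _ & _ & _ & _ & c1 & _) _].
      destruct (Hhv th' s' Hs') as [(_ & _ & _ & _ & _ & _ & _ & _ & _ & e1 & _) _].
      apply (cont2d_swap (fun a b => d_s (d_s u) a b - d_s (d_s v) a b) th' s'). apply continuity_2d_pt_minus; assumption.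
    - intros s' th' Hs'.
      destruct (Hhu th' s' Hs') as [(_ & _ & _ & _ & _ & _ & _ & _ & c1 & _) _].
      destruct (Hhv th' s' Hs') as [(_ & _ & _ & _ & _ & _ & _ & _ & e1 & _) _].
      apply (cont2d_swap (fun a b => d_th u a b - d_th v a b) th' s'). apply continuity_2d_pt_minus; assumption.
    - intros s' th' Hs'.
      destruct (Hhu th' s' Hs') as [(_ & _ & _ & _ & _ & _ & _ & _ & _ & _ & _ & _ & c1) _].
      destruct (Hhv th' s' Hs') as [(_ & _ & _ & _ & _ & _ & _ & _ & _ & _ & _ & _ & e1) _].
      apply (cont2d_swap (fun a b => d_th (d_th u) a b - d_th (d_th v) a b) th' s'). apply continuity_2d_pt_minus; assumption.
    - intros s' th' Hs'.
      destruct (Hhu th' s' Hs') as [C2u Lu]. destruct (Hhv th' s' Hs') as [C2v Lv].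
      rewrite (lap_form g1 g2 w' u th' s' Hunit Hpos1 Hpos2 Hwd Hs' C2u) in Lu.
      rewrite (lap_form g1 g2 w' v th' s' Hunit Hpos1 Hpos2 Hwd Hs' C2v) in Lv.
      fold w in Lu, Lv.
      assert (Hws : 0 < w s') by (apply Hw; lra).
      apply Rmult_integral in Lu. destruct Lu as [Lu|Lu].
      { exfalso. apply (Rinv_neq_0_compat (w s')); lra. }
      apply Rmult_integral in Lv. destruct Lv as [Lv|Lv].
      { exfalso. apply (Rinv_neq_0_compat (w s')); lra. }
      cbv beta.
      transitivity ((w' s' * d_s u th' s' + w s' * d_s (d_s u) th' s' + d_th (d_th u) th' s' / w s')
        - (w' s' * d_s v th' s' + w s' * d_s (d_s v) th' s' + d_th (d_th v) th' s' / w s')).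
      field. lra. rewrite Lu, Lv. ring.
    - intros s' Hs'. split.
      + rewrite <- (Hpu 0 s'), <- (Hpv 0 s'), Rplus_0_l. reflexivity.
      + destruct (Hhu (2 * PI) s' Hs') as [(_ & a2 & _) _].
        destruct (Hhv (2 * PI) s' Hs') as [(_ & b2 & _) _].
        unfold d_th.
        rewrite (deriv_per (fun t => u t s') (2 * PI)), (deriv_per (fun t => v t s') (2 * PI)); auto.
    - intros s' th' Hs'. cbv beta. unfold Rminus.
      eapply Rle_trans; [apply Rabs_triang|]. rewrite Rabs_Ropp.
      pose proof (HMu th' s' ltac:(lra)). pose proof (HMv th' s' ltac:(lra)). lra.
    - apply lim0_of; assumption. }
  destruct (Req_dec s 0) as [->|Hs1]. apply H0.
  destruct (per_reduce (fun th => u th s - v th s) (2 * PI)) with (x := th) as [y [Hy E]].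
  - pose proof PI_RGT_0; lra.
  - intros x. rewrite Hpu, Hpv. reflexivity.
  - pose proof (Hmain s y ltac:(lra) Hy). cbv beta in E. lra.
Qed.
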